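(* Let $V=\{0,\tfrac12,1\}$ and consider any sentential language with an atomic expressive semantics whose consequence relation is induced by the truth-relation $ss\cap tt$. Then no binary connective of the language (with any truth function) is a G-conditional.
   Context: $ss\cap tt=\models_{\{1\},\{1\}}\cap\models_{\{1,\frac12\},\{1,\frac12\}}$, where $\gamma\models_{\mathcal{D}_p,\mathcal{D}_c}\delta$ iff ($\gamma\subseteq\mathcal{D}_p\Rightarrow\delta\cap\mathcal{D}_c\neq\emptyset$). A semantics: set of valuations mapping atoms to $V$, interpreting each connective by a truth function fixed across valuations, extended compositionally, such that every assignment of values to finitely many distinct atoms is realized. Atomic expressive: for every $\gamma\subseteq V$ there are a set of formulas $\Gamma$ and a valuation $v$ with $v(\Gamma)=\gamma$. Consequence: $\Gamma\vdash\Delta$ iff $v(\Gamma)\models v(\Delta)$ for all $v$; $\Gamma,A$ denotes $\Gamma\cup\{A\}$. A G-conditional $\to$ satisfies for all $\Gamma,\Delta,A,B$: $\Gamma\vdash A\to B,\Delta$ iff $\Gamma,A\vdash B,\Delta$; and $\Gamma,A\to B\vdash\Delta$ iff ($\Gamma\vdash A,\Delta$ and $\Gamma,B\vdash\Delta$). *)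

(* Defs.v *)
From mathcomp Require Import all_boot.
Set Implicit Arguments. Unset Strict Implicit. Unset Printing Implicit Defensive.

Inductive V := V0 | Vhalf | V1.

Section Lang.
Variables (C : Type) (ar : C -> nat).

Local Unset Implicit Arguments.
Inductive form : Type :=
  | Atom : nat -> form
  | App : forall c : C, ('I_(ar c) -> form) -> form.
Local Set Implicit Arguments.

Definition interp := forall c : C, ('I_(ar c) -> V) -> V.

Fixpoint eval (f : interp) (v : nat -> V) (A : form) : V :=
  match A with
  | Atom a => v a
  | App c args => f c (fun i => eval f v (args i))
  end.

Definition app2 (c : C) (A B : form) : form :=
  App c (fun i : 'I_(ar c) => if nat_of_ord i == 0 then A else B).

Definition semantics (S : (nat -> V) -> Prop) : Prop :=
  forall (s : seq nat) (h : nat -> V),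
    exists v, S v /\ forall a, a \in s -> v a = h a.

Definition img (f : interp) (v : nat -> V) (G : form -> Prop) : V -> Prop :=
  fun x => exists A, G A /\ eval f v A = x.

Definition atomic_expressive (f : interp) (S : (nat -> V) -> Prop) : Prop :=
  forall g : V -> Prop, exists (G : form -> Prop) (v : nat -> V),
    S v /\ forall x, img f v G x <-> g x.

Definition models_D (Dp Dc : V -> Prop) (g d : V -> Prop) : Prop :=
  (forall x, g x -> Dp x) -> exists y, d y /\ Dc y.

Definition D1 (x : V) : Prop := x = V1.
Definition D1half (x : V) : Prop := x = V1 \/ x = Vhalf.

(* ss ∩ tt = |=_{{1},{1}} ∩ |=_{{1,1/2},{1,1/2}} *)
Definition sstt (g d : V -> Prop) : Prop :=
  models_D D1 D1 g d /\ models_D D1half D1half g d.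

Definition conseq (f : interp) (S : (nat -> V) -> Prop)
  (G D : form -> Prop) : Prop :=
  forall v, S v -> sstt (img f v G) (img f v D).

Definition addf (A : form) (G : form -> Prop) : form -> Prop :=
  fun B => B = A \/ G B.

Definition G_conditional (f : interp) (S : (nat -> V) -> Prop) (c : C) : Prop :=
  forall (G D : form -> Prop) (A B : form),
    (conseq f S G (addf (app2 c A B) D) <-> conseq f S (addf A G) (addf B D)) /\
    (conseq f S (addf (app2 c A B) G) D <->
       (conseq f S G (addf A D) /\ conseq f S (addf B G) D)).

End Lang.
Arguments App {C ar} c _.

(* Main.v *)
Require Import Defs.
From mathcomp Require Import all_boot.

Lemma triv_conseq (C : Type) (ar : C -> nat) (f : interp ar)
  (S : (nat -> V) -> Prop) (G D : form C ar -> Prop) (A : form C ar) :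
  G A -> D A -> conseq f S G D.
Proof.
move=> GA DA v _; split=> H; exists (eval f v A); split;
  try (exists A; split=> //); apply: H; exists A; split=> //.
Qed.

Lemma conseq_ext (C : Type) (ar : C -> nat) (f : interp ar)
  (S : (nat -> V) -> Prop) (G D D' : form C ar -> Prop) :
  (forall A, D A -> D' A) -> conseq f S G D -> conseq f S G D'.
Proof.
move=> HD H v Sv; have [H1 H2] := H v Sv; split=> Hp.
- have [y [[A [DA eA]] Dy]] := H1 Hp; exists y; split=> //; exists A; split=> //; exact: HD.
- have [y [[A [DA eA]] Dy]] := H2 Hp; exists y; split=> //; exists A; split=> //; exact: HD.
Qed.

Theorem theorem4p4 (C : Type) (ar : C -> nat) (f : interp ar)
  (S : (nat -> V) -> Prop) :
  semantics S -> atomic_expressive f S ->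
  forall c : C, ar c = 2 -> ~ G_conditional f S c.
Proof.
move=> HS _ c _ HG.
pose p := @Atom C ar 0. pose q := @Atom C ar 1.
pose X := app2 c p q. pose E := app2 c X q.
pose Em := fun _ : form C ar => False.
have [v [Sv Hv]] := HS [:: 0; 1] (fun n => if n == 0 then Vhalf else V0).
have vp : eval f v p = Vhalf by rewrite /= Hv.
have vq : eval f v q = V0 by rewrite /= Hv.
have H1 : conseq f S Em (addf X (eq p)).
  apply: (proj2 (proj1 (HG Em (eq p) p q))).
  by apply: (@triv_conseq _ _ _ _ _ _ p); [left|right].
have eX : eval f v X = V1.
  have [Hss _] := H1 v Sv.
  have [y [[A [HA eA]] Dy]] : exists y, img f v (addf X (eq p)) y /\ D1 y.
    by apply: Hss => x [A [[]]].
  rewrite /D1 in Dy; rewrite Dy in eA.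
  case: HA => HA; subst A; first by [].
  by rewrite vp in eA.
have H2 : conseq f S (addf E (eq X)) (eq q).
  apply: (proj2 (proj2 (HG (eq X) (eq q) X q))); split.
  - by apply: (@triv_conseq _ _ _ _ _ _ X); [|left].
  - by apply: (@triv_conseq _ _ _ _ _ _ q); [left|].
have eE : eval f v E = V0.
  case EE : (eval f v E) => //; exfalso; have [_ Htt] := H2 v Sv;
  (have [y [[A [HA eA]] Dy]] : exists y, img f v (eq q) y /\ D1half y;
   [apply: Htt => x [A [[HA|HA] eA]]; subst A; rewrite -eA ?EE ?eX /D1half; by auto
   | subst A; rewrite vq in eA; subst y; by case: Dy]).
have H0 : conseq f S Em (addf E (eq X)).
  apply: (proj2 (proj1 (HG Em (eq X) X q))).
  by apply: (@triv_conseq _ _ _ _ _ _ X); [left|right].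
have H3 : conseq f S Em (addf X (eq E)).
  apply: conseq_ext H0 => A [->|<-]; by [right|left].
have H4 := proj1 (proj1 (HG Em (eq E) p q)) H3.
have [_ Htt] := H4 v Sv.
have [y [[A [HA eA]] Dy]] : exists y, img f v (addf q (eq E)) y /\ D1half y.
  apply: Htt => x [A [[HA|[]] eA]]; subst A; rewrite -eA vp /D1half; by auto.
case: HA => HA; subst A; [rewrite vq in eA | rewrite eE in eA]; subst y; by case: Dy.
Qed.
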